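(* Let $\Lambda^\ast=(\lambda^\ast_{ij})\in\mathbb{R}_+^{n\times m}$ be the true intensity matrix and let $\widehat\Lambda=(\widehat\lambda_{ij})\in\mathbb{R}_+^{n\times m}$ be any intensity matrix estimator satisfying $c_1\bar\lambda_{m,n}\le\widehat\lambda_{ij}\le C_1\bar\lambda_{m,n}$ for all $(i,j)$, where $0<c_1\le C_1<\infty$ and $C_1\bar\lambda_{m,n}\le 1/2$. Define the conditional generation error $$\Delta_{(\boldsymbol\Theta_n,\mathcal{A}_n)}:=\sum_{i=1}^n\sum_{j=1}^m \mathrm{d}_{\mathrm{KL}}\Big(\mathrm{Bern}\big(1-e^{-\lambda^\ast_{ij}}\big)\,\Big\|\,\mathrm{Bern}\big(1-e^{-\widehat\lambda_{ij}}\big)\Big).$$ Then there is a constant $C>0$ depending only on $c_1$ (and $C_1$) such that $$\frac{\Delta_{(\boldsymbol\Theta_n,\mathcal{A}_n)}}{nm}\le C\,\frac{\|\widehat\Lambda-\Lambda^\ast\|_F^2}{nm\,\bar\lambda_{m,n}}.$$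
   Context: $\bar\lambda_{m,n}>0$ is a scale parameter. In the intensity-link hypergraph model, conditionally on latent factors the incidence entries are independent with $b_{ij}\sim\mathrm{Bern}(1-e^{-\lambda_{ij}})$; $\Delta_{(\boldsymbol\Theta_n,\mathcal{A}_n)}$ is the KL divergence between the conditional incidence law under the true intensities $\Lambda^\ast$ and under the estimated intensities $\widehat\Lambda$, which by independence is the sum of the entrywise Bernoulli KL divergences. $\|\cdot\|_F$ is the Frobenius norm. *)

(* Defs.v *)
From mathcomp Require Import all_boot all_order all_algebra.
From mathcomp Require Import all_classical all_reals all_analysis.
Set Implicit Arguments. Unset Strict Implicit. Unset Printing Implicit Defensive.
Import Order.TTheory GRing.Theory Num.Theory.
Local Open Scope ring_scope.

Definition xlogxy {R : realType} (x y : R) : R :=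
  if x == 0 then 0 else x * ln (x / y).

Definition bernKL {R : realType} (p q : R) : R :=
  xlogxy p q + xlogxy (1 - p) (1 - q).

Definition link {R : realType} (l : R) : R := 1 - expR (- l).

Definition gen_error {R : realType} {n m : nat} (Lstar Lhat : 'M[R]_(n, m)) : R :=
  \sum_(i < n) \sum_(j < m) bernKL (link (Lstar i j)) (link (Lhat i j)).

Definition frob_norm {R : realType} {n m : nat} (A : 'M[R]_(n, m)) : R :=
  Num.sqrt (\sum_(i < n) \sum_(j < m) (A i j) ^+ 2).

(* Main.v *)
Set Warnings "-all".
Set Implicit Arguments. Unset Strict Implicit.
Require Import Defs.
From mathcomp Require Import all_boot all_order all_algebra.
From mathcomp Require Import all_classical all_reals all_analysis.
From mathcomp Require Import ring lra.
Import Order.TTheory GRing.Theory Num.Theory.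
Local Open Scope ring_scope.

Lemma ln_le_sub1 (R : realType) (x : R) : 0 < x -> ln x <= x - 1.
Proof.
move=> x0; have := @le_ln1Dx R (x - 1).
have -> : 1 + (x - 1) = x by ring. by apply; lra.
Qed.

Lemma xlogxy_le (R : realType) (x y : R) : 0 <= x -> 0 < y ->
  xlogxy x y <= x * (x / y - 1).
Proof.
move=> x0 y0; rewrite /xlogxy; case: eqP => [->|/eqP xn0]; first by rewrite mul0r.
have xp : 0 < x by rewrite lt_def xn0.
apply: ler_wpM2l => //; apply: ln_le_sub1; exact: divr_gt0.
Qed.

Lemma kl_chi2 (R : realType) (p q : R) : 0 <= p -> p < 1 -> 0 < q -> q < 1 ->
  bernKL p q <= (p - q) ^+ 2 / (q * (1 - q)).
Proof.
move=> p0 p1 q0 q1; rewrite /bernKL.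
have h1 := xlogxy_le p0 q0.
have h2 : xlogxy (1 - p) (1 - q) <= (1 - p) * ((1 - p) / (1 - q) - 1).
  by apply: xlogxy_le; lra.
apply: le_trans (lerD h1 h2) _.
have q0' : q != 0 by rewrite gt_eqF.
have q1' : 1 - q != 0 by apply/eqP; lra.
rewrite le_eqVlt; apply/orP; left; apply/eqP. field. by rewrite q0' q1'.
Qed.

Lemma link_diff (R : realType) (a b : R) : 0 <= a -> 0 <= b ->
  (link a - link b) ^+ 2 <= (a - b) ^+ 2.
Proof.
have key : forall a b : R, 0 <= a -> a <= b -> 0 <= expR (- a) - expR (- b) <= b - a.
  move=> x y x0 xy.
  have e : expR (- x) - expR (- y) = expR (- x) * (1 - expR (- (y - x))).
    by rewrite mulrBr mulr1 -expRD; congr (_ - expR _); ring.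
  have h1 := expR_ge1Dx (- (y - x)).
  have h2 : expR (- x) <= 1 by rewrite expR_le1; lra.
  have h3 : expR (- (y - x)) <= 1 by rewrite expR_le1; lra.
  have h4 := expR_gt0 (- x).
  rewrite e; apply/andP; split; first by apply: mulr_ge0; lra.
  nra.
move=> a0 b0; rewrite /link.
have -> : 1 - expR (- a) - (1 - expR (- b)) = expR (- b) - expR (- a) by ring.
case: (leP a b) => ab.
  have /andP[h1 h2] := key _ _ a0 ab. nra.
have /andP[h1 h2] := key _ _ b0 (ltW ab). nra.
Qed.

Lemma entry_bound (R : realType) (c1 lbar a b : R) : 0 < c1 -> 0 < lbar ->
  b <= 1/2 -> c1 * lbar <= b -> 0 <= a ->
  bernKL (link a) (link b) <= 4 / (c1 * lbar) * (b - a) ^+ 2.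
Proof.
move=> c0 l0 b2 cb a0.
have cl : 0 < c1 * lbar by apply: mulr_gt0.
have b0 : 0 < b by lra.
have ea := expR_gt0 (- a); have eb := expR_gt0 (- b).
have ea1 : expR (- a) <= 1 by rewrite expR_le1; lra.
have F := expR_ge1Dx b; have F' := expR_ge1Dx (- b).
have EF : expR (- b) * expR b = 1 by rewrite -expRD addNr expR0.
have ebu : expR (- b) <= 1 - b / 2 by nra.
set q := link b; set p := link a.
have qd : q = 1 - expR (- b) by [].
have pd : p = 1 - expR (- a) by [].
have q0 : b / 2 <= q by lra.
have q1 : 1 / 2 <= 1 - q by lra.
apply: le_trans (kl_chi2 _ _ _ _) _; try lra.
have hd := link_diff a0 (ltW b0); rewrite -/p -/q in hd.
have qq : c1 * lbar / 4 <= q * (1 - q) by nra.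
have qq0 : 0 < c1 * lbar / 4 by lra.
have qp : 0 < q * (1 - q) by nra.
rewrite ler_pdivrMr //.
have K1 : 4 / (c1 * lbar) * (c1 * lbar / 4) = 1.
  by field; rewrite ?gt_eqF ?(mulf_neq0) ?gt_eqF.
have K0 : 0 < 4 / (c1 * lbar) by apply: divr_gt0.
have s0 : (b - a) ^+ 2 = (a - b) ^+ 2 by ring.
rewrite s0.
have sq0 : 0 <= (a - b) ^+ 2 by apply: sqr_ge0.
have KX : 0 <= 4 / (c1 * lbar) * (a - b) ^+ 2 by apply: mulr_ge0; lra.
have h := mulr_ge0 KX (_ : 0 <= q * (1 - q) - c1 * lbar / 4).
have := h ltac:(lra).
have -> : 4 / (c1 * lbar) * (a - b) ^+ 2 * (q * (1 - q) - c1 * lbar / 4) =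
  4 / (c1 * lbar) * (a - b) ^+ 2 * (q * (1 - q)) - (a - b) ^+ 2 * (4 / (c1 * lbar) * (c1 * lbar / 4)) by ring.
rewrite K1 mulr1; lra.
Qed.

Unset Implicit Arguments. Set Strict Implicit.
Theorem theorem4 (R : realType) (c1 C1 : R) :
  0 < c1 -> c1 <= C1 ->
  exists C : R, 0 < C /\
    forall (n m : nat) (lbar : R) (Lstar Lhat : 'M[R]_(n, m)),
      0 < lbar -> C1 * lbar <= 1 / 2 ->
      (forall i j, 0 <= Lstar i j) ->
      (forall i j, c1 * lbar <= Lhat i j /\ Lhat i j <= C1 * lbar) ->
      gen_error Lstar Lhat / (n * m)%:R
        <= C * ((frob_norm (Lhat - Lstar)) ^+ 2 / ((n * m)%:R * lbar)).
Proof.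
move=> c0 cC; exists (4 / c1); split; first by apply: divr_gt0.
move=> n m lbar Ls Lh l0 Cl Ls0 Lhb.
have S0 : 0 <= \sum_(i < n) \sum_(j < m) (Lh - Ls) i j ^+ 2.
  by apply: sumr_ge0 => i _; apply: sumr_ge0 => j _; apply: sqr_ge0.
rewrite /frob_norm sqr_sqrtr //.
have G : gen_error Ls Lh <= 4 / (c1 * lbar) * \sum_(i < n) \sum_(j < m) (Lh - Ls) i j ^+ 2.
  rewrite /gen_error mulr_sumr; apply: ler_sum => i _.
  rewrite mulr_sumr; apply: ler_sum => j _.
  rewrite !mxE; have [h1 h2] := Lhb i j.
  apply: entry_bound => //.
  have : c1 * lbar <= C1 * lbar by apply: ler_wpM2r; lra.
  lra.
have -> : 4 / c1 * ((\sum_(i < n) \sum_(j < m) (Lh - Ls) i j ^+ 2) / ((n * m)%:R * lbar))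
   = 4 / (c1 * lbar) * (\sum_(i < n) \sum_(j < m) (Lh - Ls) i j ^+ 2) / (n * m)%:R.
  rewrite invfM; rewrite invfM; ring.
apply: ler_wpM2r => //; rewrite invr_ge0; exact: ler0n.
Qed.
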